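(* Let $a_{21}^0(u)=45u+608u^3-512u^5+16u(28u^2-3)\cos4u+3u\cos8u+12\sin4u-432u^2\sin4u+256u^4\sin4u-6\sin8u$. Then $a_{21}^0(u)<0$ for all $u>0$. *)

(* Defs.v *)
From Stdlib Require Import Reals.
Open Scope R_scope.

Definition a21_0 (u : R) : R :=
  45*u + 608*u^3 - 512*u^5 + 16*u*(28*u^2 - 3)*cos (4*u) + 3*u*cos (8*u)
  + 12*sin (4*u) - 432*u^2*sin (4*u) + 256*u^4*sin (4*u) - 6*sin (8*u).

(* Main.v *)
Require Import Defs.
From Stdlib Require Import Reals Lra QArith Qreals List Qround.
Open Scope R_scope.

Fixpoint peval (p : list Q) (x : R) : R :=
  match p with nil => 0 | q :: p' => Q2R q + x * peval p' x end.

Lemma Q2R0 : Q2R 0 = 0.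
Proof. unfold Q2R; simpl; field. Qed.

Lemma Q2R_red q : Q2R (Qred q) = Q2R q.
Proof. apply Qeq_eqR, Qred_correct. Qed.

Fixpoint padd (p q : list Q) : list Q :=
  match p, q with
  | nil, _ => q
  | _, nil => p
  | a :: p', b :: q' => Qred (a + b) :: padd p' q'
  end.

Lemma peval_add p q x : peval (padd p q) x = peval p x + peval q x.
Proof.
  revert q; induction p as [|a p IH]; intros [|b q]; cbn [padd peval]; try lra.
  rewrite Q2R_red, Q2R_plus, IH; ring.
Qed.

Definition pscal (c : Q) (p : list Q) : list Q := map (fun a => Qred (c * a)) p.

Lemma peval_scal c p x : peval (pscal c p) x = Q2R c * peval p x.
Proof.
  unfold pscal in *; induction p as [|a p IH]; cbn [peval map]; try lra.
  rewrite Q2R_red, Q2R_mult, IH; ring.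
Qed.

Fixpoint pmul (p q : list Q) : list Q :=
  match p with nil => nil | a :: p' => padd (pscal a q) (0%Q :: pmul p' q) end.

Lemma peval_mul p q x : peval (pmul p q) x = peval p x * peval q x.
Proof.
  induction p as [|a p IH]; cbn [peval pmul]; try lra.
  rewrite peval_add, peval_scal; cbn [peval]; rewrite IH, Q2R0; ring.
Qed.

Fixpoint pcomp (k : Q) (p : list Q) : list Q :=
  match p with nil => nil | a :: p' => a :: pscal k (pcomp k p') end.

Lemma peval_comp k p x : peval (pcomp k p) x = peval p (Q2R k * x).
Proof.
  induction p as [|a p IH]; cbn [peval pcomp]; try lra.
  rewrite peval_scal, IH; ring.
Qed.

Definition popp (p : list Q) : list Q := map Qopp p.
Lemma peval_opp p x : peval (popp p) x = - peval p x.
Proof.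
  unfold popp in *; induction p as [|a p IH]; cbn [peval map]; try lra.
  rewrite Q2R_opp, IH; ring.
Qed.

Fixpoint pint_aux (k : nat) (p : list Q) : list Q :=
  match p with
  | nil => nil
  | a :: p' => Qred (a / inject_Z (Z.of_nat k)) :: pint_aux (S k) p'
  end.

Lemma dlim_ext f g x l l' : (forall y, f y = g y) -> l = l' ->
  derivable_pt_lim f x l -> derivable_pt_lim g x l'.
Proof.
  intros Hfg <- H eps Heps. destruct (H eps Heps) as [d Hd]. exists d.
  intros h Hh Hhd. rewrite <- !Hfg. apply Hd; auto.
Qed.

Lemma Q2R_inject_nat k : Q2R (inject_Z (Z.of_nat k)) = INR k.
Proof. unfold Q2R; simpl. rewrite INR_IZR_INZ. field. Qed.

Lemma pint_deriv p : forall j x,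
  derivable_pt_lim (fun y => y ^ (S j) * peval (pint_aux (S j) p) y) x
    (x ^ j * peval p x).
Proof.
  induction p as [|a p IH]; intros j x; cbn [pint_aux peval].
  - apply (dlim_ext (fct_cte 0) _ x 0); [intro; unfold fct_cte; ring | ring |].
    apply derivable_pt_lim_const.
  - set (c := Q2R (Qred (a / inject_Z (Z.of_nat (S j))))).
    assert (Hc : c * INR (S j) = Q2R a).
    { assert (Hn : INR (S j) <> 0) by (apply not_0_INR; discriminate).
      unfold c; rewrite Q2R_red, Q2R_div.
      - rewrite Q2R_inject_nat. field. exact Hn.
      - intro H. apply Qeq_eqR in H. rewrite Q2R_inject_nat, Q2R0 in H. exact (Hn H). }
    assert (D1 : derivable_pt_lim (fun y => c * y ^ S j) x (c * (INR (S j) * x ^ j))).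
    { apply (dlim_ext (mult_fct (fct_cte c) (fun y => y ^ S j)) _ x
         (0 * x ^ S j + fct_cte c x * (INR (S j) * x ^ pred (S j)))).
      - intro; reflexivity.
      - unfold fct_cte; simpl pred; ring.
      - apply derivable_pt_lim_mult; [apply derivable_pt_lim_const | apply derivable_pt_lim_pow]. }
    assert (D2 := IH (S j) x).
    apply (dlim_ext (plus_fct (fun y => c * y ^ S j) (fun y => y ^ S (S j) * peval (pint_aux (S (S j)) p) y)) _ x
       (c * (INR (S j) * x ^ j) + x ^ (S j) * peval p x)).
    + intro y; unfold plus_fct; cbn [pow]. fold c; ring.
    + rewrite <- Hc; cbn [pow]; ring.
    + apply derivable_pt_lim_plus; assumption.
Qed.

Fixpoint cosQ (n : nat) : list Q :=
  match n with
  | O => 1%Q :: nil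
  | S m => 1%Q :: popp (pint_aux 1 (0%Q :: pint_aux 1 (cosQ m)))
  end.
Definition sinQ (n : nat) : list Q := 0%Q :: pint_aux 1 (cosQ n).

Lemma Q2R1 : Q2R 1 = 1.
Proof. unfold Q2R; simpl; field. Qed.

Lemma sinQ_deriv n x : derivable_pt_lim (peval (sinQ n)) x (peval (cosQ n) x).
Proof.
  apply (dlim_ext (fun y => y ^ 1 * peval (pint_aux 1 (cosQ n)) y) _ x (x ^ 0 * peval (cosQ n) x)).
  - intro y. unfold sinQ. cbn [peval]. rewrite Q2R0. ring.
  - ring.
  - apply (pint_deriv _ 0).
Qed.

Lemma cosQ_deriv n x : derivable_pt_lim (peval (cosQ (S n))) x (- peval (sinQ n) x).
Proof.
  apply (dlim_ext (plus_fct (fct_cte 1) (fun y => -1 * (y ^ 1 * peval (pint_aux 1 (sinQ n)) y))) _ x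
     (0 + (0 * (x ^ 1 * peval (pint_aux 1 (sinQ n)) x) + fct_cte (-1) x * (x ^ 0 * peval (sinQ n) x)))).
  - intro y. unfold plus_fct, fct_cte. cbn [cosQ peval]. rewrite peval_opp, Q2R1.
    unfold sinQ. cbn [peval]. ring.
  - unfold fct_cte; ring.
  - apply derivable_pt_lim_plus; [apply derivable_pt_lim_const|].
    apply (derivable_pt_lim_mult (fct_cte (-1)) (fun y => y ^ 1 * peval (pint_aux 1 (sinQ n)) y)).
    + apply derivable_pt_lim_const.
    + apply (pint_deriv _ 0).
Qed.


Lemma D_scal f a x l : derivable_pt_lim f x l -> derivable_pt_lim (fun y => a * f y) x (a * l).
Proof.
  intro H. apply (dlim_ext (mult_fct (fct_cte a) f) _ x (0 * f x + fct_cte a x * l)).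
  - intro; reflexivity.
  - unfold fct_cte; ring.
  - apply derivable_pt_lim_mult; [apply derivable_pt_lim_const | exact H].
Qed.

Lemma D_sub f g x l1 l2 : derivable_pt_lim f x l1 -> derivable_pt_lim g x l2 ->
  derivable_pt_lim (fun y => f y - g y) x (l1 - l2).
Proof.
  intros H1 H2. apply (dlim_ext (minus_fct f g) _ x (l1 - l2)).
  - intro; reflexivity.
  - reflexivity.
  - apply derivable_pt_lim_minus; assumption.
Qed.

Lemma mono0 (h h' : R -> R) : (forall c, derivable_pt_lim h c (h' c)) ->
  (forall c, 0 <= c -> 0 <= h' c) -> forall x, 0 <= x -> h 0 <= h x.
Proof.
  intros Hd Hp x Hx. destruct (Req_dec x 0) as [->|Hn]; [lra|].
  destruct (MVT_cor2 h h' 0 x) as [c [Hc1 Hc2]]; [lra| intros; apply Hd |].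
  assert (0 <= h' c) by (apply Hp; lra). nra.
Qed.

Lemma trig_bounds n : forall x, 0 <= x ->
  0 <= (-1) ^ n * (peval (cosQ n) x - cos x) /\ 0 <= (-1) ^ n * (peval (sinQ n) x - sin x).
Proof.
  assert (Hs : forall n, (forall x, 0 <= x -> 0 <= (-1) ^ n * (peval (cosQ n) x - cos x)) ->
      forall x, 0 <= x -> 0 <= (-1) ^ n * (peval (sinQ n) x - sin x)).
  { intros m Hc x Hx.
    assert (H0 : (-1) ^ m * (peval (sinQ m) 0 - sin 0) = 0).
    { unfold sinQ; cbn [peval]; rewrite Q2R0, sin_0; ring. }
    rewrite <- H0.
    apply (mono0 (fun y => (-1) ^ m * (peval (sinQ m) y - sin y))
                 (fun y => (-1) ^ m * (peval (cosQ m) y - cos y))); auto.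
    intro c. apply D_scal, D_sub; [apply sinQ_deriv | apply derivable_pt_lim_sin]. }
  induction n as [|n IH]; intros x Hx.
  - assert (H : forall x, 0 <= x -> 0 <= (-1) ^ 0 * (peval (cosQ 0) x - cos x)).
    { intros y _. cbn [cosQ peval]. rewrite Q2R1. pose proof (COS_bound y). simpl; lra. }
    split; [apply H; auto | apply Hs; auto].
  - assert (H : forall x, 0 <= x -> 0 <= (-1) ^ S n * (peval (cosQ (S n)) x - cos x)).
    { intros y Hy.
      assert (H0 : (-1) ^ S n * (peval (cosQ (S n)) 0 - cos 0) = 0).
      { cbn [cosQ peval]; rewrite Q2R1, cos_0; ring. }
      rewrite <- H0.
      apply (mono0 (fun y => (-1) ^ S n * (peval (cosQ (S n)) y - cos y))
                   (fun y => (-1) ^ n * (peval (sinQ n) y - sin y))); auto.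
      + intro c.
        apply (dlim_ext (fun y => (-1) ^ S n * (peval (cosQ (S n)) y - cos y)) _ c
          ((-1) ^ S n * (- peval (sinQ n) c - - sin c))); [reflexivity | cbn [pow]; ring |].
        apply D_scal, D_sub; [apply cosQ_deriv | apply derivable_pt_lim_cos].
      + intros c Hc. apply (IH c Hc). }
    split; [apply H; auto | apply Hs; auto].
Qed.

Fixpoint ihorner (p : list Q) (lo hi : Q) : Q * Q :=
  match p with
  | nil => (0%Q, 0%Q)
  | q :: p' =>
      let r := ihorner p' lo hi in
      (Qred (q + (if Qle_bool 0 (fst r) then lo * fst r else hi * fst r)),
       Qred (q + (if Qle_bool 0 (snd r) then hi * snd r else lo * snd r)))
  end.

Lemma Qsign (q : Q) : (Qle_bool 0 q = true -> 0 <= Q2R q) /\ (Qle_bool 0 q = false -> Q2R q < 0).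
Proof.
  split; intro H.
  - apply Qle_bool_iff in H. apply Qle_Rle in H. rewrite Q2R0 in H. exact H.
  - assert (H' : (q < 0)%Q).
    { apply Qnot_le_lt. intro H'. apply Qle_bool_iff in H'. congruence. }
    apply Qlt_Rlt in H'. rewrite Q2R0 in H'. exact H'.
Qed.

Lemma ihorner_sound p lo hi x : 0 <= Q2R lo -> Q2R lo <= x <= Q2R hi ->
  Q2R (fst (ihorner p lo hi)) <= peval p x <= Q2R (snd (ihorner p lo hi)).
Proof.
  intros H0 Hx. induction p as [|q p IH]; cbn [ihorner peval fst snd].
  - rewrite Q2R0; lra.
  - set (l := fst (ihorner p lo hi)) in *. set (u := snd (ihorner p lo hi)) in *.
    set (v := peval p x) in *.
    destruct (Qsign l) as [Hl1 Hl2]. destruct (Qsign u) as [Hu1 Hu2].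
    rewrite !Q2R_red, !Q2R_plus.
    split.
    + destruct (Qle_bool 0 l).
      * rewrite Q2R_mult. specialize (Hl1 eq_refl). nra.
      * rewrite Q2R_mult. specialize (Hl2 eq_refl). nra.
    + destruct (Qle_bool 0 u).
      * rewrite Q2R_mult. specialize (Hu1 eq_refl). nra.
      * rewrite Q2R_mult. specialize (Hu2 eq_refl). nra.
Qed.

Fixpoint check (n : nat) (p : list Q) (lo hi : Q) : bool :=
  if Qle_bool 0 (snd (ihorner p lo hi)) then
    match n with
    | O => false
    | S m => let mid := Qred ((lo + hi) / 2) in check m p lo mid && check m p mid hi
    end
  else true.

Lemma check_sound n : forall p lo hi x, check n p lo hi = true ->
  0 <= Q2R lo -> Q2R lo <= x <= Q2R hi -> peval p x < 0.
Proof.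
  induction n as [|n IH]; intros p lo hi x Hc H0 Hx; cbn [check] in Hc.
  - destruct (Qsign (snd (ihorner p lo hi))) as [_ H2].
    destruct (Qle_bool 0 (snd (ihorner p lo hi))); [discriminate|].
    specialize (H2 eq_refl). pose proof (ihorner_sound p lo hi x H0 Hx). lra.
  - destruct (Qsign (snd (ihorner p lo hi))) as [_ H2].
    destruct (Qle_bool 0 (snd (ihorner p lo hi))).
    + apply andb_prop in Hc. destruct Hc as [Hc1 Hc2].
      assert (Hm : Q2R (Qred ((lo + hi) / 2)) = (Q2R lo + Q2R hi) / 2).
      { rewrite Q2R_red, Q2R_div, Q2R_plus.
        - unfold Q2R at 3; simpl; field.
        - intro H. apply Qeq_eqR in H. rewrite Q2R0 in H. unfold Q2R in H; simpl in H. lra. }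
      destruct (Rle_dec x (Q2R (Qred ((lo + hi) / 2)))).
      * apply (IH p lo _ x Hc1 H0). lra.
      * apply (IH p _ hi x Hc2); lra.
    + specialize (H2 eq_refl). pose proof (ihorner_sound p lo hi x H0 Hx). lra.
Qed.

Fixpoint zeros (n : nat) (p : list Q) : bool :=
  match n with
  | O => true
  | S m => match p with nil => true | q :: p' => Qeq_bool q 0 && zeros m p' end
  end.

Lemma zeros_sound n : forall p x, zeros n p = true -> peval p x = x ^ n * peval (skipn n p) x.
Proof.
  induction n as [|n IH]; intros p x H.
  - simpl; ring.
  - destruct p as [|q p]; cbn [skipn peval].
    + ring.
    + cbn [zeros] in H. apply andb_prop in H. destruct H as [H1 H2].
      apply Qeq_bool_iff, Qeq_eqR in H1. rewrite H1, Q2R0, (IH p x H2). simpl; ring.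
Qed.

Definition Gf (x c s d e : R) : R :=
  (45/2*x + 19*x^3 - x^5) + (14*x^3 - 24*x)*c + 3/2*x*d + (24 - 54*x^2 + 2*x^4)*s - 12*e.

Definition Kp : list Q := (0 :: 45#2 :: 0 :: 19 :: 0 :: -1 :: nil)%Q.
Definition Ap : list Q := (0 :: -24 :: 0 :: 14 :: nil)%Q.
Definition Dp : list Q := (0 :: 3#2 :: nil)%Q.
Definition Bp : list Q := (24 :: 0 :: -54 :: 0 :: 2 :: nil)%Q.
Definition Ep : list Q := (-12 :: nil)%Q.

Definition combo (C S C2 S2 : list Q) : list Q :=
  padd Kp (padd (pmul Ap C) (padd (pmul Dp C2) (padd (pmul Bp S) (pmul Ep S2)))).

Lemma combo_eval C S C2 S2 x :
  Gf x (peval C x) (peval S x) (peval C2 x) (peval S2 x) = peval (combo C S C2 S2) x.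
Proof.
  unfold combo, Gf. rewrite !peval_add, !peval_mul.
  unfold Kp, Ap, Dp, Bp, Ep. cbn [peval]. unfold Q2R; simpl. field.
Qed.

Fixpoint ple (p q : list Q) : bool :=
  match p, q with
  | nil, nil => true
  | a :: p', b :: q' => Qle_bool a b && ple p' q'
  | _, _ => false
  end.

Lemma ple_sound p : forall q x, ple p q = true -> 0 <= x -> peval p x <= peval q x.
Proof.
  induction p as [|a p IH]; intros [|b q] x H Hx; cbn [ple peval] in *; try discriminate; try lra.
  apply andb_prop in H. destruct H as [H1 H2].
  apply Qle_bool_iff, Qle_Rle in H1. specialize (IH q x H2 Hx). nra.
Qed.

Fixpoint rnd_aux (k : Z) (p : list Q) : list Q :=
  match p with
  | nil => nil
  | a :: p' => (Qceiling (a * inject_Z (2 ^ k)) # Z.to_pos (2 ^ k)) :: rnd_aux (k + 3) p'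
  end.

Definition good (C S C2 S2 : list Q) : bool :=
  let P := combo C S C2 S2 in
  let R := skipn 15 P in
  let R' := rnd_aux 64 R in
  zeros 15 P && ple R R' && check 14 R' 0 8.

Lemma good_sound C S C2 S2 x : good C S C2 S2 = true -> 0 < x <= 8 ->
  Gf x (peval C x) (peval S x) (peval C2 x) (peval S2 x) < 0.
Proof.
  intros H Hx. unfold good in H. apply andb_prop in H. destruct H as [H H2].
  apply andb_prop in H. destruct H as [H1 H3].
  rewrite combo_eval, (zeros_sound _ _ x H1).
  assert (Hn : peval (skipn 15 (combo C S C2 S2)) x < 0).
  { eapply Rle_lt_trans; [apply (ple_sound _ _ x H3); lra|].
    apply (check_sound _ _ _ _ x H2); rewrite ?Q2R0; [lra|]. assert (E8 : Q2R 8 = 8) by (unfold Q2R; simpl; field). rewrite E8. lra. }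
  assert (0 < x ^ 15) by (apply pow_lt; lra). nra.
Qed.

Lemma affg (g : R -> R) L U c : (forall t, g t = (g 1 - g 0) * t + g 0) ->
  L <= c <= U -> g L < 0 -> g U < 0 -> g c < 0.
Proof.
  intros Ha Hc HL HU. rewrite Ha in HL, HU |- *.
  set (a := g 1 - g 0) in *. set (b := g 0) in *.
  assert (E : (c - L) * (a * U + b) + (U - c) * (a * L + b) = (U - L) * (a * c + b)) by ring.
  destruct (Req_dec U L) as [->|Hne].
  - assert (Ec : c = L) by lra. rewrite Ec. exact HL.
  - assert (HUL : 0 < U - L) by lra.
    assert (P1 : (c - L) * (a * U + b) <= 0) by nra.
    assert (P2 : (U - c) * (a * L + b) <= 0) by nra.
    assert (P3 : (U - L) * (a * c + b) < 0).
    { destruct (Rlt_or_le L c) as [Hlc|Hlc].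
      - assert ((c - L) * (a * U + b) < 0) by nra. lra.
      - assert ((U - c) * (a * L + b) < 0) by nra. lra. }
    destruct (Rlt_or_le (a * c + b) 0) as [Hr|Hr]; [exact Hr|].
    assert (0 <= (U - L) * (a * c + b)) by nra. lra.
Qed.

Lemma corner x cl cu sl su dl du el eu :
  cl <= cos x <= cu -> sl <= sin x <= su -> dl <= cos (2*x) <= du -> el <= sin (2*x) <= eu ->
  (forall c s d e, (c = cl \/ c = cu) -> (s = sl \/ s = su) -> (d = dl \/ d = du) ->
     (e = el \/ e = eu) -> Gf x c s d e < 0) ->
  Gf x (cos x) (sin x) (cos (2*x)) (sin (2*x)) < 0.
Proof.
  intros Hc Hs Hd He H.
  assert (H4 : forall c s d, (c = cl \/ c = cu) -> (s = sl \/ s = su) -> (d = dl \/ d = du) ->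
     Gf x c s d (sin (2*x)) < 0).
  { intros c s d H1 H2 H3. apply (affg (fun e => Gf x c s d e) el eu); auto.
    intro t; unfold Gf; ring. }
  assert (H3 : forall c s, (c = cl \/ c = cu) -> (s = sl \/ s = su) ->
     Gf x c s (cos (2*x)) (sin (2*x)) < 0).
  { intros c s H1 H2. apply (affg (fun d => Gf x c s d (sin (2*x))) dl du); auto.
    intro t; unfold Gf; ring. }
  assert (H2 : forall c, (c = cl \/ c = cu) -> Gf x c (sin x) (cos (2*x)) (sin (2*x)) < 0).
  { intros c H1. apply (affg (fun s => Gf x c s (cos (2*x)) (sin (2*x))) sl su); auto.
    intro t; unfold Gf; ring. }
  apply (affg (fun c => Gf x c (sin x) (cos (2*x)) (sin (2*x))) cl cu); auto.
  intro t; unfold Gf; ring.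
Qed.

Lemma Q2R2 : Q2R 2 = 2.
Proof. unfold Q2R; simpl; field. Qed.

Lemma small x : 0 < x <= 8 -> Gf x (cos x) (sin x) (cos (2*x)) (sin (2*x)) < 0.
Proof.
  intro Hx.
  destruct (trig_bounds 20 x ltac:(lra)) as [A1 A2].
  destruct (trig_bounds 21 x ltac:(lra)) as [B1 B2].
  destruct (trig_bounds 20 (2*x) ltac:(lra)) as [C1 C2].
  destruct (trig_bounds 21 (2*x) ltac:(lra)) as [D1 D2].
  replace ((-1) ^ 20) with 1 in A1, A2, C1, C2 by (simpl; ring).
  replace ((-1) ^ 21) with (-1) in B1, B2, D1, D2 by (simpl; ring).
  rewrite <- Q2R2, <- !peval_comp in C1, C2, D1, D2.
  rewrite Q2R2 in C1, C2, D1, D2.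
  apply (corner x (peval (cosQ 21) x) (peval (cosQ 20) x) (peval (sinQ 21) x) (peval (sinQ 20) x)
    (peval (pcomp 2 (cosQ 21)) x) (peval (pcomp 2 (cosQ 20)) x)
    (peval (pcomp 2 (sinQ 21)) x) (peval (pcomp 2 (sinQ 20)) x)); try lra.
  intros c s d e H1 H2 H3 H4.
  destruct H1 as [-> | ->]; destruct H2 as [-> | ->]; destruct H3 as [-> | ->]; destruct H4 as [-> | ->];
    (apply good_sound; [vm_compute; reflexivity | lra]).
Qed.

Lemma large x : 8 < x -> Gf x (cos x) (sin x) (cos (2*x)) (sin (2*x)) < 0.
Proof.
  intro Hx. unfold Gf.
  pose proof (COS_bound x). pose proof (SIN_bound x).
  pose proof (COS_bound (2*x)). pose proof (SIN_bound (2*x)).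
  assert (Hx2 : 64 < x^2) by nra.
  assert (HA : 0 <= 14*x^3 - 24*x) by nra.
  assert (HB : 0 <= 24 - 54*x^2 + 2*x^4) by nra.
  assert (T1 : (14*x^3 - 24*x) * cos x <= 14*x^3 - 24*x) by nra.
  assert (T2 : (24 - 54*x^2 + 2*x^4) * sin x <= 24 - 54*x^2 + 2*x^4) by nra.
  assert (T3 : 3/2*x*cos (2*x) <= 3/2*x) by nra.
  assert (Hx4 : 8 * x^4 <= x^5) by nra.
  assert (Hx3 : 8 * x^3 <= x^4) by nra.
  assert (0 < x^3) by nra.
  nra.
Qed.

Theorem lemma5p4 : forall u : R, 0 < u -> a21_0 u < 0.
Proof.
  intros u Hu.
  assert (E : a21_0 u = Gf (4*u) (cos (4*u)) (sin (4*u)) (cos (2*(4*u))) (sin (2*(4*u))) / 2).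
  { unfold a21_0, Gf. replace (8*u) with (2*(4*u)) by ring. field. }
  rewrite E.
  destruct (Rle_dec (4*u) 8).
  - pose proof (small (4*u) ltac:(lra)). lra.
  - pose proof (large (4*u) ltac:(lra)). lra.
Qed.
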